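(* Let $R$ be a Noetherian integral domain containing $\mathbb{F}_q$, with field of fractions $K$, and let $A\in\mathrm{GL}_n(R)$. Then for every solution $X\in K_{\mathrm{sep}}^n$ of the system $AX^{(q)}=X$, the coordinates of $X$ are integral over $R$.
   Context: $K_{\mathrm{sep}}$ is a separable closure of $K$ (all solutions in an algebraic closure lie there); $X^{(q)}$ denotes the vector obtained by raising each coordinate to the $q$-th power; $\mathrm{GL}_n(R)$ is the group of $n\times n$ matrices over $R$ invertible over $R$. *)

(* Defs.v *)
From HB Require Import structures.
From mathcomp Require Import all_boot all_order all_algebra all_field.
Set Implicit Arguments. Unset Strict Implicit. Unset Printing Implicit Defensive.
Import GRing.Theory.
Local Open Scope ring_scope.

Definition is_ideal (R : comNzRingType) (I : R -> Prop) : Prop :=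
  [/\ I 0, (forall x y, I x -> I y -> I (x + y)) & (forall r x, I x -> I (r * x))].

Definition noetherian (R : comNzRingType) : Prop :=
  forall I : nat -> R -> Prop,
    (forall m, is_ideal (I m)) ->
    (forall m x, I m x -> I m.+1 x) ->
    exists N : nat, forall m x, (N <= m)%N -> I m x -> I N x.

Definition contains_Fq (R : nzRingType) (q : nat) : Prop :=
  exists (F : finFieldType) (f : {rmorphism F -> R}), #|F| = q.

Definition integral_over (R : comNzRingType) (L : fieldType)
  (iota : {rmorphism R -> L}) (x : L) : Prop :=
  exists p : {poly R}, p \is monic /\ root (map_poly iota p) x.

(* L, together with the injective embedding iota : R -> L, is a separable
   closure of the fraction field K = Frac(R):
   - every element of L is a root of a nonzero separable polynomial with
     coefficients in K (equivalently, after clearing denominators, in R),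
     i.e. L is separable algebraic over K (and K embeds in L via iota);
   - L is separably closed: every nonconstant separable polynomial over L
     has a root in L. *)
Definition is_sep_closure_of_frac (R : idomainType) (L : fieldType)
  (iota : {rmorphism R -> L}) : Prop :=
  [/\ injective iota,
      (forall x : L, exists p : {poly R},
          p != 0 /\ separable_poly (map_poly iota p) /\ root (map_poly iota p) x)
    & (forall p : {poly L}, (1 < size p)%N -> separable_poly p ->
          exists x : L, root p x)].

(* Main.v *)
Require Import Defs.
From HB Require Import structures.
From mathcomp Require Import all_boot all_order all_algebra all_field.
From mathcomp Require Import zify.
Set Implicit Arguments. Unset Strict Implicit.
Import GRing.Theory.
Local Open Scope ring_scope.

Definition mono (L : fieldType) n (x : 'I_n -> L) (e : 'I_n -> nat) : L :=
  \prod_j x j ^+ e j.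

Definition inM (R : idomainType) (L : fieldType) (iota : {rmorphism R -> L}) n q
  (x : 'I_n -> L) (y : L) : Prop :=
  exists c : {ffun {ffun 'I_n -> 'I_q} -> R},
    y = \sum_f iota (c f) * mono x (fun j => f j).

Lemma inM_add (R : idomainType) (L : fieldType) (iota : {rmorphism R -> L}) n q x y z :
  inM iota q x y -> inM iota q x z -> inM (n:=n) iota q x (y + z).
Proof.
move=> [c ->] [d ->]; exists [ffun f => c f + d f].
rewrite -big_split; apply: eq_bigr => f _; by rewrite ffunE rmorphD mulrDl.
Qed.

Lemma inM_scale (R : idomainType) (L : fieldType) (iota : {rmorphism R -> L}) n q x r y :
  inM iota q x y -> inM (n:=n) iota q x (iota r * y).
Proof.
move=> [c ->]; exists [ffun f => r * c f].
rewrite mulr_sumr; apply: eq_bigr => f _; by rewrite ffunE rmorphM mulrA.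
Qed.

Lemma inM0 (R : idomainType) (L : fieldType) (iota : {rmorphism R -> L}) n q x :
  inM (n:=n) iota q x 0.
Proof. by exists [ffun=> 0]; rewrite big1 // => f _; rewrite ffunE rmorph0 mul0r. Qed.

Lemma inM_sum (R : idomainType) (L : fieldType) (iota : {rmorphism R -> L}) n q x
  (I : finType) (F : I -> L) :
  (forall i, inM (n:=n) iota q x (F i)) -> inM iota q x (\sum_i F i).
Proof.
move=> h; apply: (big_ind (inM iota q x)) => //; [exact: inM0 | exact: inM_add].
Qed.

Lemma inM_mono (R : idomainType) (L : fieldType) (iota : {rmorphism R -> L}) n q x
  (g : {ffun 'I_n -> 'I_q}) : inM iota q x (mono x (fun j => g j)).
Proof.
exists [ffun f => (f == g)%:R]; rewrite (bigD1 g) //= big1 ?addr0.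
  by rewrite ffunE eqxx rmorph1 mul1r.
by move=> f /negbTE fg; rewrite ffunE fg rmorph0 mul0r.
Qed.

Lemma mono_mulx (L : fieldType) n (x : 'I_n -> L) e k :
  x k * mono x e = mono x (fun j => (e j + (j == k))%N).
Proof.
rewrite /mono [RHS](eq_bigr (fun j => x j ^+ e j * x j ^+ (j == k))); last first.
  by move=> j _; rewrite exprD.
rewrite big_split /= mulrC; congr (_ * _).
rewrite (bigD1 k) //= eqxx expr1 big1 ?mulr1 // => j /negbTE ->.
by rewrite expr0.
Qed.

Lemma sum_delta n (k : 'I_n) : (\sum_(j < n) (j == k) = 1)%N.
Proof.
rewrite (bigD1 k) //= eqxx big1 // => j /negbTE -> //.
Qed.

Lemma mono_all (R : idomainType) (L : fieldType) (iota : {rmorphism R -> L}) n q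
  (x : 'I_n -> L) (B : 'M[R]_n) : (1 < q)%N ->
  (forall i, x i ^+ q = \sum_k iota (B i k) * x k) ->
  forall d e, (\sum_j e j <= d)%N -> inM iota q x (mono x e).
Proof.
move=> q2 hB; elim=> [|d IH] e.
  move=> he.
  have e0 : forall j, e j = 0%N.
    move=> j; apply/eqP; rewrite -leqn0; apply: leq_trans he.
    by rewrite (bigD1 j) //= leq_addr.
  have q0 : (0 < q)%N by apply: ltn_trans q2.
  have := inM_mono iota x [ffun j : 'I_n => Ordinal q0].
  congr inM; rewrite /mono; apply: eq_bigr => j _; by rewrite ffunE e0.
move=> he.
case: (boolP [forall j, e j < q]%N) => [/forallP hlt | /forallPn [i]].
  have := inM_mono iota x [ffun j : 'I_n => Ordinal (hlt j)].
  congr inM; rewrite /mono; apply: eq_bigr => j _; by rewrite ffunE.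
rewrite -leqNgt => hi.
pose e' := fun j => if j == i then (e i - q)%N else e j.
have he' : (\sum_j e j = \sum_j e' j + q)%N.
  rewrite (bigD1 i) //= [X in _ = (X + _)%N](bigD1 i) //= /e' eqxx.
  rewrite [X in _ = (_ + X + _)%N](eq_bigr e); last by move=> j /negbTE ->.
  by rewrite addnAC subnK.
have hm : mono x e = x i ^+ q * mono x e'.
  rewrite /mono (bigD1 i) //= [X in _ = _ * X](bigD1 i) //= /e' eqxx.
  rewrite mulrA -exprD subnKC //; congr (_ * _).
  by apply: eq_bigr => j /negbTE ->.
rewrite hm hB mulr_suml; apply: inM_sum => k.
rewrite -mulrA; apply: inM_scale; rewrite mono_mulx; apply: IH.
rewrite big_split /= sum_delta; move: he; rewrite he'.
move: (\sum_j e' j)%N => s; case: q q2 {hB hi hm he' e'} => [|[|q']] //= _.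
move=> h; lia.
Qed.
Lemma int_of_module (R : idomainType) (L : fieldType) (iota : {rmorphism R -> L})
  N (v : 'I_N -> L) (C : 'M[R]_N) x k0 : v k0 != 0 ->
  (forall l, x * v l = \sum_k iota (C k l) * v k) -> integral_over iota x.
Proof.
move=> v0 hv; exists (char_poly C); split; first exact: char_poly_monic.
rewrite map_char_poly -eigenvalue_root_char; apply/eigenvalueP.
exists (\row_k v k); last first.
  by apply/negP => /eqP/rowP/(_ k0); rewrite !mxE; apply/eqP.
apply/rowP => l; rewrite !mxE hv; apply: eq_bigr => k _.
by rewrite !mxE mulrC.
Qed.

Lemma q_ge2 (R : idomainType) q : contains_Fq R q -> (1 < q)%N.
Proof.
case=> F [f <-]; apply/card_gt1P; exists 0, 1; split => //.
by rewrite eq_sym oner_neq0.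
Qed.

Unset Implicit Arguments.
Theorem proposition2p12 (R : idomainType) (q n : nat)
  (L : fieldType) (iota : {rmorphism R -> L})
  (hnoeth : noetherian R) (hFq : contains_Fq R q)
  (hL : is_sep_closure_of_frac iota)
  (A : 'M[R]_n) (hA : A \in unitmx)
  (X : 'cV[L]_n)
  (hX : map_mx iota A *m map_mx (fun x : L => x ^+ q) X = X) :
  forall i : 'I_n, integral_over iota (X i ord0).
Proof.
move=> i.
have q2 := q_ge2 hFq.
pose x := fun j => X j ord0.
have hB : forall j, x j ^+ q = \sum_k iota (invmx A j k) * x k.
  move=> j.
  have := congr1 (mulmx (map_mx iota (invmx A))) hX.
  rewrite mulmxA -map_mxM mulVmx // map_mx1 mul1mx => /matrixP/(_ j ord0).
  by rewrite !mxE => ->; apply: eq_bigr => k _; rewrite !mxE.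
have hall := mono_all q2 hB.
pose E := {ffun 'I_n -> 'I_q}.
have : forall f : E, exists c : {ffun E -> R},
    x i * mono x (fun j => f j) = \sum_g iota (c g) * mono x (fun j => g j).
  move=> f; rewrite mono_mulx; exact: hall _ _ (leqnn _).
case/fin_all_exists => cf hcf.
have q0 : (0 < q)%N by apply: ltn_trans q2.
pose f0 : E := [ffun j => Ordinal q0].
apply: (@int_of_module R L iota #|(predT : pred E)|
   (fun l => mono x (fun j => enum_val l j))
   (\matrix_(k, l) cf (enum_val l) (enum_val k)) _ (enum_rank f0)).
  rewrite enum_rankK /mono big1 ?oner_neq0 // => j _; by rewrite ffunE expr0.
move=> l; rewrite hcf (big_enum_val (fun g => iota (cf (enum_val l) g) * mono x (fun j => g j))).
by apply: eq_bigr => k _; rewrite mxE.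
Qed.
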